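(* Let $U,V\in K_{\mathfrak{C}}$ with $U\cap V\neq\varnothing$. If $G\in\mathscr{K}(U)$ and $H\in\mathscr{K}(V)$, then $\langle G\cup H\rangle\in\mathscr{K}(U\cup V)$. If moreover $G$ and $H$ are finitely generated, then $\langle G\cup H\rangle$ is finitely generated (so lies in $\mathscr{K}^{\mathrm{f.g.}}(U\cup V)$).
   Context: $\mathfrak{C}$ denotes a Cantor space (a space homeomorphic to $\{0,1\}^\omega$). Groups of homeomorphisms act on the right. $K_{\mathfrak{C}}$ denotes the set of non-empty proper clopen subsets of $\mathfrak{C}$. For $\gamma\in\operatorname{Homeo}(\mathfrak{C})$, $\operatorname{supp}(\gamma)=\{p\in\mathfrak{C}: p\gamma\neq p\}$. For a non-empty $D\subseteq\mathfrak{C}$, a subgroup $G\le\operatorname{Homeo}(\mathfrak{C})$ is vigorous over $D$ if for every non-empty clopen $A\subseteq D$ and all non-empty proper clopen subsets $B,C$ of $A$ there is $\gamma\in G$ with $\operatorname{supp}(\gamma)\subseteq A$ and $B\gamma\subseteq C$. $\mathscr{K}(D)$ is the family of simple subgroups $G\le\operatorname{Homeo}(\mathfrak{C})$ such that $\operatorname{supp}(g)\subseteq D$ for all $g\in G$ and $G$ is vigorous over $D$; $\mathscr{K}^{\mathrm{f.g.}}(D)$ is the subfamily of finitely generated groups in $\mathscr{K}(D)$. *)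

(* Defs.v *)
From HB Require Import structures.
From mathcomp Require Import all_boot all_order all_algebra.
From mathcomp Require Import all_classical all_reals all_analysis.
Set Implicit Arguments. Unset Strict Implicit. Unset Printing Implicit Defensive.
Local Open Scope classical_set_scope.

(* The Cantor space is mathcomp-analysis's
   cantor_space = nat -> bool with the product topology. *)
Notation C := cantor_space.
Definition fn := C -> C.

Definition homeo (f : fn) : Prop :=
  continuous f /\ exists g : fn, continuous g /\ g \o f = id /\ f \o g = id.

(* a subgroup of Homeo(C), viewed as a set of functions; the group product
   (right action: p(gh) = (pg)h) is  h \o g, inverse is the inverse map. *)
Definition is_homeo_group (G : set fn) : Prop :=
  G `<=` homeo /\ G id /\
  (forall f g, G f -> G g -> G (g \o f)) /\
  (forall f, G f -> exists g, G g /\ g \o f = id /\ f \o g = id).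

Definition normal_sub (N G : set fn) : Prop :=
  is_homeo_group N /\ N `<=` G /\
  (forall g g' n, G g -> g' \o g = id -> g \o g' = id -> N n ->
     N (g \o n \o g')).

Definition simple_group (G : set fn) : Prop :=
  is_homeo_group G /\ (exists g, G g /\ g <> id) /\
  (forall N, normal_sub N G -> N = [set id] \/ N = G).

Definition gen (S : set fn) : set fn :=
  [set f | forall H, is_homeo_group H -> S `<=` H -> H f].

Definition fin_gen (G : set fn) : Prop :=
  exists S : set fn, finite_set S /\ gen S = G.

Definition supp (f : fn) : set C := [set p | f p <> p].

Definition KC (A : set C) : Prop := clopen A /\ A !=set0 /\ A <> setT.

Definition vigorous (G : set fn) (D : set C) : Prop :=
  forall A B E : set C, clopen A -> A !=set0 -> A `<=` D ->
    clopen B -> B !=set0 -> B `<` A ->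
    clopen E -> E !=set0 -> E `<` A ->
    exists g, G g /\ supp g `<=` A /\ g @` B `<=` E.

Definition scrK (D : set C) (G : set fn) : Prop :=
  simple_group G /\ (forall g, G g -> supp g `<=` D) /\ vigorous G D.

Definition scrK_fg (D : set C) (G : set fn) : Prop := scrK D G /\ fin_gen G.

(* Main.v *)
Require Import Defs.
From mathcomp Require Import all_boot all_classical all_reals all_analysis.
Local Open Scope classical_set_scope.
Set Implicit Arguments. Unset Strict Implicit.
Lemma not_open1 (p : C) : ~ open [set p].
Proof. by move: cantor_perfect => /perfectTP. Qed.
Lemma clopen_base (O : set C) (p : C) : open O -> O p ->
  exists W, clopen W /\ W p /\ W `<=` O.
Proof.
move=> oO Op.
have := @zero_dimensional_cvg C p cantor_space_hausdorff cantor_zero_dimensional cantor_space_compact.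
move=> /(_ O) []; first by apply: open_nbhs_nbhs.
move=> D [Dp cD] DO; by exists D.
Qed.

Lemma sep_clopen (f : fn) (O : set C) (p : C) : continuous f -> f p <> p ->
  open O -> O p -> exists W, clopen W /\ W p /\ W `<=` O /\ (forall q, W q -> ~ W (f q)).
Proof.
move=> cf fp oO Op.
have [Z [cZ Zp nZ]] : exists Z : set C, [/\ clopen Z, Z p & ~ Z (f p)].
  apply: cantor_zero_dimensional; by apply/eqP => /esym.
have oI : open (O `&` Z `&` f @^-1` (~` Z)).
  apply: openI; first exact: openI _ cZ.1.
  by apply: open_comp => [x _|]; [exact: cf | exact: closed_openC cZ.2].
have [W [cW [Wp WO]]] := @clopen_base _ p oI (conj (conj Op Zp) nZ).
exists W; split=> //; split=> //; split; first by move=> x /WO [[]].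
by move=> q /WO [[_ _] /= nZq] /WO [[_ ?]].
Qed.

Lemma split_clopen (W : set C) : clopen W -> W !=set0 ->
  exists Z, clopen Z /\ (W `&` Z) !=set0 /\ (W `&` ~` Z) !=set0.
Proof.
move=> cW [p Wp].
have [q [Wq qp]] : exists q, W q /\ q <> p.
  apply: contrapT => nq; apply: (@not_open1 p).
  suff -> : [set p] = W by exact: cW.1.
  apply/seteqP; split=> x; first by move=> ->.
  by move=> Wx; apply: contrapT => xp; apply: nq; exists x.
have [Z [cZ Zp nZ]] : exists Z : set C, [/\ clopen Z, Z p & ~ Z q].
  by apply: cantor_zero_dimensional; apply/eqP => /esym.
by exists Z; split => //; split; [exists p | exists q].
Qed.
Lemma appE (f g : fn) x : f = g -> f x = g x.
Proof. by move=> ->. Qed.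

Lemma pw (f g : fn) : g \o f = id -> forall x, g (f x) = x.
Proof. by move=> e x; rewrite -[RHS]/(id x) -e. Qed.


Lemma grp_inv K f : is_homeo_group K -> K f ->
  exists g, K g /\ (forall x, g (f x) = x) /\ (forall x, f (g x) = x).
Proof.
move=> [_ [_ [_ hi]]] /hi [g [Kg [e1 e2]]]; exists g; split => //.
by split; [exact: pw e1 | exact: pw e2].
Qed.

Lemma grp_cont K f : is_homeo_group K -> K f -> continuous f.
Proof. by move=> [hK _] /hK []. Qed.

Lemma grp_id K : is_homeo_group K -> K id.
Proof. by case=> _ []. Qed.

Lemma grp_comp K f g : is_homeo_group K -> K f -> K g -> K (g \o f).
Proof. by case=> _ [_ [hc _]]; apply: hc. Qed.

Lemma inv_uniq (f g g' : fn) : (forall x, g (f x) = x) -> (forall x, f (g' x) = x) -> g = g'.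
Proof.
move=> e1 e2; apply/funext => x.
by rewrite -[in RHS](e1 (g' x)) e2.
Qed.

Lemma cont_id : continuous (@id C).
Proof. by move=> x; exact: cvg_id. Qed.

Lemma homeo_grp : is_homeo_group homeo.
Proof.
split=> //; split.
  by split; [exact: cont_id | exists id; split; [exact: cont_id|]].
split.
  move=> f g [cf [f' [cf' [e1 e2]]]] [cg [g' [cg' [e3 e4]]]].
  split; first by move=> x; apply: continuous_comp; [exact: cf | exact: cg].
  exists (f' \o g'); split; first by move=> x; apply: continuous_comp; [exact: cg' | exact: cf'].
  split; apply/funext => x /=.
    by rewrite (pw e3) (pw e1).
  by rewrite (pw e2) (pw e4).
move=> f [cf [f' [cf' [e1 e2]]]]; exists f'; split=> //.
by split=> //; exists f.
Qed.

Lemma gen_sub S : S `<=` gen S.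
Proof. by move=> f Sf K _ /(_ f Sf). Qed.

Lemma gen_min S K : is_homeo_group K -> S `<=` K -> gen S `<=` K.
Proof. by move=> hK SK f /(_ K hK SK). Qed.

Lemma gen_group S : S `<=` homeo -> is_homeo_group (gen S).
Proof.
move=> Sh.
have gh : gen S `<=` homeo by apply: gen_min => //; exact: homeo_grp.
split=> //; split; first by move=> K hK _; exact: grp_id.
split; first by move=> f g Gf Gg K hK SK; apply: grp_comp => //; [exact: Gf | exact: Gg].
move=> f Gf; have [cf [g [cg [e1 e2]]]] := gh f Gf.
exists g; split=> //.
move=> K hK SK; have [g' [Kg' [e3 e4]]] := grp_inv hK (Gf K hK SK).
have -> : g = g' by apply: (inv_uniq (f := f)) => //; exact: pw e1.
exact: Kg'.
Qed.

Lemma suppP (f : fn) (D : set C) : supp f `<=` D <-> (forall q, ~ D q -> f q = q).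
Proof.
split=> h q.
  by move=> nD; apply: contrapT => fq; apply: nD; apply: h.
by move=> fq; apply: contrapT => nD; apply: fq; apply: h.
Qed.

Lemma supp_comp (f g : fn) D : supp f `<=` D -> supp g `<=` D -> supp (g \o f) `<=` D.
Proof.
move=> /suppP hf /suppP hg; apply/suppP => q nq /=.
by rewrite hf // hg.
Qed.

Lemma supp_inv (f g : fn) D : (forall x, g (f x) = x) -> supp f `<=` D -> supp g `<=` D.
Proof.
move=> e /suppP hf; apply/suppP => q nq.
by rewrite -{1}(hf q nq) e.
Qed.

Lemma maps_in (f g : fn) (A : set C) q : (forall x, g (f x) = x) -> supp f `<=` A -> A q -> A (f q).
Proof.
move=> e /suppP hf Aq; apply: contrapT => nA.
have := hf _ nA => ffq.
have fq : f q = q by rewrite -[in RHS](e q) -ffq e.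
by apply: nA; rewrite fq.
Qed.

Lemma comm_disj (a b : fn) (ainv binv : fn) :
  (forall x, ainv (a x) = x) -> (forall x, binv (b x) = x) ->
  (forall q, a q <> q -> b q <> q -> False) -> forall q, a (b q) = b (a q).
Proof.
move=> ea eb dj q.
have [aq|aq] := pselect (a q = q); have [bq|bq] := pselect (b q = q).
- by rewrite aq bq.
- rewrite aq; have [abq|abq] := pselect (a (b q) = b q) => //.
  exfalso; apply: (dj (b q)) => // bbq.
  by apply: bq; rewrite -[in RHS](eb q) -bbq eb.
- rewrite bq; have [bbq|bbq] := pselect (b (a q) = a q) => //.
  exfalso; apply: (dj (a q)) => // aaq.
  by apply: aq; rewrite -[in RHS](ea q) -aaq ea.
- by exfalso; exact: dj q aq bq.
Qed.
Lemma supp_id (A : set C) : supp id `<=` A.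
Proof. by move=> p /= []. Qed.

Lemma vigx (K : set fn) (D A B E : set C) : vigorous K D -> K id ->
  clopen A -> A `<=` D -> clopen B -> B `<=` A -> (exists a, A a /\ ~ B a) ->
  clopen E -> E !=set0 -> E `<=` A ->
  exists g, K g /\ supp g `<=` A /\ (forall x, B x -> E (g x)).
Proof.
move=> vK Kid cA AD cB BA [a [Aa nBa]] cE E0 EA.
have [[b Bb]|B0] := pselect (exists b, B b); last first.
  by exists id; split=> //; split; [exact: supp_id | move=> x Bx; exfalso; apply: B0; exists x].
have [AE|nAE] := pselect (forall a, A a -> E a).
  by exists id; split=> //; split; [exact: supp_id | move=> x /BA /AE].
have [a' [Aa' nEa']] : exists a', A a' /\ ~ E a'.
  by apply: contrapT => h; apply: nAE => x Ax; apply: contrapT => nE; apply: h; exists x.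
have [g [Kg [sg gB]]] := vK A B E cA (ex_intro _ a Aa) AD cB (ex_intro _ b Bb)
  (conj BA (fun h => nBa (h a Aa))) cE E0 (conj EA (fun h => nEa' (h a' Aa'))).
exists g; split=> //; split=> // x Bx; apply: gB; by exists x.
Qed.

Lemma nontriv (K : set fn) (D W : set C) : vigorous K D -> K id ->
  clopen W -> W `<=` D -> W !=set0 ->
  exists g q, K g /\ supp g `<=` W /\ g q <> q.
Proof.
move=> vK Kid cW WD W0.
have [Z [cZ [[b [Wb Zb]] [e [We nZe]]]]] := split_clopen cW W0.
have [g [Kg [sg gB]]] := @vigx K D W (W `&` Z) (W `&` ~` Z) vK Kid cW WD
  (clopenI cW cZ) (fun x h => proj1 h) (ex_intro _ e (conj We (fun h => nZe (proj2 h))))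
  (clopenI cW (clopenC W cZ)) (ex_intro _ e (conj We nZe)) (fun x h => proj1 h).
exists g, b; split=> //; split=> // gb.
have := gB b (conj Wb Zb); rewrite gb; by case.
Qed.
Lemma fixP (f : fn) (D : set C) q : supp f `<=` D -> ~ D q -> f q = q.
Proof. by move=> /suppP h; apply: h. Qed.

Lemma transfer (A R1 R2 X : set C) (k kinv h : fn) :
  (forall x, k (kinv x) = x) -> (forall x, kinv (k x) = x) ->
  supp k `<=` R1 `|` X -> (forall x, X x -> R1 (k x)) -> supp h `<=` X `|` R2 ->
  R1 `<=` A -> R2 `<=` A -> (forall x, R2 x -> ~ R1 x /\ ~ X x) ->
  supp (k \o h \o kinv) `<=` A.
Proof.
move=> e1 e2 sk kX sh R1A R2A d2.
apply/suppP => y nAy /=.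
have [[Xz|R2z]|nz] := pselect ((X `|` R2) (kinv y)).
- by exfalso; apply: nAy; rewrite -(e1 y); apply: R1A; apply: kX.
- exfalso; apply: nAy.
  have kz : k (kinv y) = kinv y by by apply: (fixP sk); case: (d2 _ R2z) => n1 n2 [].
  by rewrite -(e1 y) kz; apply: R2A.
- by rewrite (fixP sh nz) e1.
Qed.
Lemma case1 (U V : set C) (G H Gm : set fn) (A Y F : set C) :
  clopen U -> clopen V -> (exists x, U x /\ V x) ->
  is_homeo_group G -> is_homeo_group H -> is_homeo_group Gm -> G `<=` Gm -> H `<=` Gm ->
  vigorous G U -> vigorous H V ->
  clopen A -> A `<=` U `|` V ->
  (exists p, A p /\ ~ V p) -> (exists q, A q /\ ~ U q) ->
  clopen Y -> Y !=set0 -> (forall y, Y y -> A y /\ U y) ->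
  clopen F -> F !=set0 -> (forall y, F y -> A y /\ U y) ->
  exists g, Gm g /\ supp g `<=` A /\ (forall x, A x -> ~ Y x -> F (g x)).
Proof.
move=> cU cV [x0 [Ux0 Vx0]] hG hH hM GM HM vG vH cA AUV [p0 [Ap0 nVp0]] [q0 [Aq0 nUq0]]
  cY Y0 YAU cF F0 FAU.
pose X := U `&` V. pose P := A `&` ~` V. pose Q := A `&` ~` U.
have cX : clopen X := clopenI cU cV.
have cP : clopen P := clopenI cA (clopenC A cV).
have cQ : clopen Q := clopenI cA (clopenC A cU).
have PU : forall x, P x -> U x by move=> x [/AUV [] // ? ?].
have QV : forall x, Q x -> V x by move=> x [/AUV [] // ? ?].
have dPX : forall x, P x -> ~ X x by move=> x [_ ?] [].
have dQX : forall x, Q x -> ~ X x by move=> x [_ ?] [].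
have dPQ : forall x, P x -> ~ Q x by move=> x /PU ? [].
have GI := grp_id hG. have HI := grp_id hH.
have [k' [Hk' [sk' k'X]]] := @vigx H V (Q `|` X) X Q vH HI (clopenU cQ cX)
  (fun x h => match h with or_introl q => QV x q | or_intror xx => proj2 xx end)
  cX (fun x h => or_intror h) (ex_intro _ q0 (conj (or_introl (conj Aq0 nUq0)) (fun h => nUq0 (proj1 h))))
  cQ (ex_intro _ q0 (conj Aq0 nUq0)) (fun x h => or_introl h).
have [k'i [Hk'i [ek'1 ek'2]]] := grp_inv hH Hk'.
have [Z [cZ [P1ne [p1 [Pp1 nZp1]]]]] := split_clopen cP (ex_intro _ p0 (conj Ap0 nVp0)).
pose P1 := P `&` Z.
have cP1 : clopen P1 := clopenI cP cZ.
have [h' [Gh' [sh' h'X]]] := @vigx G U (P `|` X) X P1 vG GI (clopenU cP cX)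
  (fun x h => match h with or_introl q => PU x q | or_intror xx => proj1 xx end)
  cX (fun x h => or_intror h) (ex_intro _ p0 (conj (or_introl (conj Ap0 nVp0)) (fun h => nVp0 (proj2 h))))
  cP1 P1ne (fun x h => or_introl (proj1 h)).
pose tau := k' \o h' \o k'i.
have Mtau : Gm tau.
  exact: (grp_comp hM (HM _ Hk'i) (grp_comp hM (GM _ Gh') (HM _ Hk'))).
have stau : supp tau `<=` A.
  apply: (@transfer A Q P X k' k'i h') => //.
  idtac.
  all: try by move=> x [].
  all: try by move=> x Px; split; [exact: dPQ | exact: dPX].
  by move=> x /sh' [];[right|left].
pose Q2 := k'i @^-1` X.
have Q2Q : forall y, Q2 y -> Q y by move=> y Q2y; rewrite -(ek'2 y); exact: k'X.
have tauQ2 : forall y, Q2 y -> P1 (tau y).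
  move=> y Q2y; have := h'X _ Q2y => P1h.
  rewrite /tau /= (fixP sk') //; by case=> [/(dPQ _ (proj1 P1h))|/(dPX _ (proj1 P1h))].
have [g0 [Gg0 [sg0 g0P1]]] := @vigx G U (A `&` U) P1 Y vG GI (clopenI cA cU) (fun x h => proj2 h)
  cP1 (fun x h => conj (proj1 (proj1 h)) (PU _ (proj1 h)))
  (ex_intro _ p1 (conj (conj (proj1 Pp1) (PU _ Pp1)) (fun h => nZp1 (proj2 h))))
  cY Y0 YAU.
pose rho := g0 \o tau.
have Mrho : Gm rho := grp_comp hM Mtau (GM _ Gg0).
have sg0' : supp g0 `<=` A by move=> x /sg0 [].
have srho : supp rho `<=` A := supp_comp stau sg0'.
have rhoQ2 : forall y, Q2 y -> Y (rho y) := fun y h => g0P1 _ (tauQ2 _ h).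
have [ri [Mri [eri1 eri2]]] := grp_inv hM Mrho.
have sri : supp ri `<=` A := supp_inv eri1 srho.
have cQ2 : clopen Q2 := preimage_clopen cX (grp_cont hH Hk'i).
have Q2ne : Q2 !=set0 by exists (k' x0); rewrite /Q2 /= ek'1.
have [Z2 [cZ2 [[qa [Q2qa Z2qa]] [qs [Q2qs nZ2qs]]]]] := split_clopen cQ2 Q2ne.
pose Qs := Q2 `&` ~` Z2. pose Qa := Q2 `&` Z2.
have cQs : clopen Qs := clopenI cQ2 (clopenC setT cZ2).
have [k [Gk [sk kX]]] := @vigx G U (P `|` X) X P vG GI (clopenU cP cX)
  (fun x h => match h with or_introl q => PU x q | or_intror xx => proj1 xx end)
  cX (fun x h => or_intror h) (ex_intro _ p0 (conj (or_introl (conj Ap0 nVp0)) (fun h => nVp0 (proj2 h))))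
  cP (ex_intro _ p0 (conj Ap0 nVp0)) (fun x h => or_introl h).
have [ki [Gki [ek1 ek2]]] := grp_inv hG Gk.
have [h [Hh [sh hX]]] := @vigx H V (X `|` Q) ((X `|` Q) `&` ~` Qs) X vH HI (clopenU cX cQ)
  (fun x h => match h with or_introl xx => proj2 xx | or_intror q => QV x q end)
  (clopenI (clopenU cX cQ) (clopenC setT cQs)) (fun x h => proj1 h)
  (ex_intro _ qs (conj (or_intror (Q2Q _ Q2qs)) (fun h => proj2 h (conj Q2qs nZ2qs))))
  cX (ex_intro _ x0 (conj Ux0 Vx0)) (fun x h => or_introl h).
pose tau1 := k \o h \o ki.
have Mtau1 : Gm tau1 := grp_comp hM (GM _ Gki) (grp_comp hM (HM _ Hh) (GM _ Gk)).
have stau1 : supp tau1 `<=` A.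
  apply: (@transfer A P Q X k ki h) => //.
  - by move=> x [].
  - by move=> x [].
  - by move=> x Qx; split; [move=> /dPQ; apply | exact: dQX].
have ski : supp ki `<=` P `|` X := supp_inv ek1 sk.
have [t1i [Mt1i [et1 et2]]] := grp_inv hM Mtau1.
have T1 : forall y, A y -> ~ Qs y -> A (tau1 y) /\ U (tau1 y).
  move=> y Ay nQs; split; first exact: (maps_in et1 stau1 Ay).
  have [XQz|nXQz] := pselect (((X `|` Q) `&` ~` Qs) (ki y)).
    by apply: PU; rewrite /tau1 /=; apply: kX; apply: hX.
  have [[Xz|Qz]|nz] := pselect ((X `|` Q) (ki y)).
  - by exfalso; apply: nXQz; split; [left=> // | move=> [Q2z _]; exact: dQX _ (Q2Q _ Q2z) Xz].
  - have kz : k (ki y) = ki y by apply: (fixP sk) => -[Pz|Xz']; [exact: dPQ _ Pz Qz | exact: dQX _ Qz Xz'].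
    exfalso; apply: nXQz; split; [right=> // | move=> Qsz; apply: nQs].
    by rewrite -(ek2 y) kz.
  - rewrite /tau1 /= (fixP sh nz) ek2.
    case: (AUV _ Ay) => // Vy; apply: contrapT => nUy.
    have kiy : ki y = y by apply: (fixP ski) => -[/dPQ|/dQX]; apply; split.
    by apply: nz; right; rewrite kiy; split.
pose Hole := t1i @^-1` Qa.
have cHole : clopen Hole := preimage_clopen (clopenI cQ2 cZ2) (grp_cont hM Mt1i).
have Aqa : A qa := proj1 (Q2Q _ Q2qa).
have nQsqa : ~ Qs qa := fun h => proj2 h Z2qa.
have Holeqa : Hole (tau1 qa) by rewrite /Hole /= et1; split.
have [gl [Ggl [sgl glB]]] := @vigx G U (A `&` U) ((A `&` U) `&` ~` Hole) F vG GI (clopenI cA cU)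
  (fun x h => proj2 h) (clopenI (clopenI cA cU) (clopenC setT cHole)) (fun x h => proj1 h)
  (ex_intro _ (tau1 qa) (conj (T1 qa Aqa nQsqa) (fun h => proj2 h Holeqa))) cF F0 FAU.
have sgl' : supp gl `<=` A by move=> x /sgl [].
exists (gl \o tau1 \o ri); split.
  exact: grp_comp hM Mri (grp_comp hM Mtau1 (GM _ Ggl)).
split; first exact: supp_comp sri (supp_comp stau1 sgl').
move=> x Ax nYx.
have Aw : A (ri x) := maps_in eri2 sri Ax.
have nQ2w : ~ Q2 (ri x) by move=> /rhoQ2; rewrite eri2.
apply: glB; split; first by apply: T1 => // -[].
by rewrite /Hole /= et1 => -[].
Qed.
Lemma core (U V : set C) (G H Gm : set fn) (A Y F : set C) :
  clopen U -> clopen V -> (exists x, U x /\ V x) ->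
  is_homeo_group G -> is_homeo_group H -> is_homeo_group Gm -> G `<=` Gm -> H `<=` Gm ->
  vigorous G U -> vigorous H V ->
  clopen A -> A `<=` U `|` V ->
  (exists p, A p /\ ~ V p) -> (exists q, A q /\ ~ U q) ->
  clopen Y -> Y !=set0 -> ((forall y, Y y -> A y /\ U y) \/ (forall y, Y y -> A y /\ V y)) ->
  clopen F -> F !=set0 -> ((forall y, F y -> A y /\ U y) \/ (forall y, F y -> A y /\ V y)) ->
  exists g, Gm g /\ supp g `<=` A /\ (forall x, A x -> ~ Y x -> F (g x)).
Proof.
move=> cU cV [x0 [Ux0 Vx0]] hG hH hM GM HM vG vH cA AUV [p0 [Ap0 nVp0]] [q0 [Aq0 nUq0]]
  cY Y0 hY cF F0 hF.
have VU : exists x, V x /\ U x by exists x0.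
have UV : exists x, U x /\ V x by exists x0.
have AVU : A `<=` V `|` U by move=> x /AUV [];[right|left].
have P1 : exists p, A p /\ ~ V p by exists p0.
have Q1 : exists q, A q /\ ~ U q by exists q0.
pose P := A `&` ~` V. pose Q := A `&` ~` U.
have cP : clopen P := clopenI cA (clopenC setT cV).
have cQ : clopen Q := clopenI cA (clopenC setT cU).
have PAU : forall y, P y -> A y /\ U y by move=> y [Ay nV]; split=> //; case: (AUV _ Ay).
have QAV : forall y, Q y -> A y /\ V y by move=> y [Ay nU]; split=> //; case: (AUV _ Ay).
have P0 : P !=set0 by exists p0.
have Q0 : Q !=set0 by exists q0.
case: hY => hY; case: hF => hF.
- exact: (@case1 U V G H Gm A Y F cU cV UV hG hH hM GM HM vG vH cA AUV P1 Q1 cY Y0 hY cF F0 hF).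
- have [g1 [M1 [s1 e1]]] := @case1 U V G H Gm A Y P cU cV UV hG hH hM GM HM vG vH cA AUV P1 Q1
    cY Y0 hY cP P0 PAU.
  have [g2 [M2 [s2 e2]]] := @case1 V U H G Gm A Q F cV cU VU hH hG hM HM GM vH vG cA AVU Q1 P1
    cQ Q0 QAV cF F0 hF.
  exists (g2 \o g1); split; first exact: grp_comp hM M1 M2.
  split; first exact: supp_comp s1 s2.
  move=> x Ax nYx; have := e1 x Ax nYx => -[Ag nVg]; apply: e2 => // -[_ nUg].
  by case: (AUV _ Ag).
- have [g1 [M1 [s1 e1]]] := @case1 V U H G Gm A Y Q cV cU VU hH hG hM HM GM vH vG cA AVU Q1 P1
    cY Y0 hY cQ Q0 QAV.
  have [g2 [M2 [s2 e2]]] := @case1 U V G H Gm A P F cU cV UV hG hH hM GM HM vG vH cA AUV P1 Q1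
    cP P0 PAU cF F0 hF.
  exists (g2 \o g1); split; first exact: grp_comp hM M1 M2.
  split; first exact: supp_comp s1 s2.
  move=> x Ax nYx; have := e1 x Ax nYx => -[Ag nUg]; apply: e2 => // -[_ nVg].
  by case: (AUV _ Ag).
- exact: (@case1 V U H G Gm A Y F cV cU VU hH hG hM HM GM vH vG cA AVU Q1 P1 cY Y0 hY cF F0 hF).
Qed.

Lemma vig_union (U V : set C) (G H Gm : set fn) :
  clopen U -> clopen V -> (exists x, U x /\ V x) ->
  is_homeo_group G -> is_homeo_group H -> is_homeo_group Gm -> G `<=` Gm -> H `<=` Gm ->
  vigorous G U -> vigorous H V -> vigorous Gm (U `|` V).
Proof.
move=> cU cV UV hG hH hM GM HM vG vH A B E cA A0 AUV cB B0 BA cE E0 EA.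
have [AU|nAU] := pselect (A `<=` U).
  have [g [Gg [sg gB]]] := vG A B E cA A0 AU cB B0 BA cE E0 EA.
  by exists g; split=> //; exact: GM.
have [AV|nAV] := pselect (A `<=` V).
  have [g [Gg [sg gB]]] := vH A B E cA A0 AV cB B0 BA cE E0 EA.
  by exists g; split=> //; exact: HM.
have ex_out : forall S : set C, ~ (A `<=` S) -> exists p, A p /\ ~ S p.
  move=> S nAS; apply: contrapT => h; apply: nAS => x Ax; apply: contrapT => nS.
  by apply: h; exists x.
have [Y0 Y0p] : exists y, A y /\ ~ B y by apply: ex_out; case: BA.
pose Y := A `&` ~` B.
have cY : clopen Y := clopenI cA (clopenC setT cB).
have [Y1 [cY1 [Y1ne [Y1Y hY1]]]] : exists Y1, clopen Y1 /\ Y1 !=set0 /\ Y1 `<=` Y /\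
    ((forall y, Y1 y -> A y /\ U y) \/ (forall y, Y1 y -> A y /\ V y)).
  have [[y [Yy Uy]]|nU] := pselect (exists y, Y y /\ U y).
    exists (Y `&` U); split; first exact: clopenI cY cU.
    split; first by exists y.
    by split; [move=> x [] | left=> x [[Ax _] Ux]].
  exists Y; split=> //; split; first by exists Y0.
  split=> //; right=> x [Ax nBx]; split=> //.
  case: (AUV _ Ax) => // Ux; exfalso; apply: nU; by exists x.
have [F1 [cF1 [F1ne [F1E hF1]]]] : exists F1, clopen F1 /\ F1 !=set0 /\ F1 `<=` E /\
    ((forall y, F1 y -> A y /\ U y) \/ (forall y, F1 y -> A y /\ V y)).
  have EA' := proj1 EA.
  have [[y [Ey Uy]]|nU] := pselect (exists y, E y /\ U y).
    exists (E `&` U); split; first exact: clopenI cE cU.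
    split; first by exists y.
    by split; [move=> x [] | left=> x [/EA' Ax Ux]].
  exists E; split=> //; split=> //.
  split=> //; right=> x Ex; split; first exact: EA'.
  case: (AUV _ (EA' _ Ex)) => // Ux; exfalso; apply: nU; by exists x.
have [g [Mg [sg gY]]] := @core U V G H Gm A Y1 F1 cU cV UV hG hH hM GM HM vG vH cA AUV
  (ex_out V nAV) (ex_out U nAU) cY1 Y1ne hY1 cF1 F1ne hF1.
exists g; split=> //; split=> // _ [x Bx <-].
apply: F1E; apply: gY; first exact: (proj1 BA).
by move=> /Y1Y [].
Qed.
Lemma normal_inter (Gm N K : set fn) : is_homeo_group K -> normal_sub N Gm -> K `<=` Gm ->
  normal_sub (N `&` K) K.
Proof.
move=> hK [hN [NM nN]] KM.
have hI : is_homeo_group (N `&` K).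
  split; first by move=> f [/(proj1 hN)].
  split; first by split; exact: grp_id.
  split; first by move=> f g [Nf Kf] [Ng Kg]; split; exact: grp_comp.
  move=> f [Nf Kf].
  have [fn' [Nfn [e1 e2]]] := grp_inv hN Nf.
  have [fk [Kfk [e3 e4]]] := grp_inv hK Kf.
  have efk : fn' = fk := inv_uniq e1 e4.
  exists fn'; split; first by split=> //; rewrite efk.
  by split; apply/funext => x /=; [exact: e1 | exact: e2].
split=> //; split; first by move=> f [].
move=> g g' n Kg e1 e2 [Nn Kn]; split.
  by apply: nN => //; exact: KM.
have [gk [Kgk [e3 e4]]] := grp_inv hK Kg.
have -> : g' = gk by apply: inv_uniq e4 => x; exact: (pw e1).
exact: (grp_comp hK Kgk (grp_comp hK Kn Kg)).
Qed.

Lemma normal_fix (Gm N K : set fn) (D : set C) (n : fn) (p : C) :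
  is_homeo_group Gm -> normal_sub N Gm -> K `<=` Gm -> simple_group K -> vigorous K D ->
  open D -> N n -> D p -> n p <> p -> K `<=` N.
Proof.
move=> hM hNs KM [hK [_ sK]] vK oD Nn Dp np.
have [hN [NM nN]] := hNs.
have KI := grp_id hK.
have [W [cW [Wp [WD Wn]]]] := sep_clopen (grp_cont hN Nn) np oD Dp.
have [g [q [Kg [sg gq]]]] := nontriv vK KI cW WD (ex_intro _ p Wp).
have [gi [Kgi [eg1 eg2]]] := grp_inv hK Kg.
have Wq : W q by apply: sg.
have Wp1 : W (g q) := maps_in eg1 sg Wq.
have gip1 : gi (g q) <> g q by rewrite eg1 => /esym.
have [W1 [cW1 [W1p [W1W W1n]]]] := sep_clopen (grp_cont hK Kgi) gip1 cW.1 Wp1.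
have [g' [q1 [Kg' [sg' g'q1]]]] := nontriv vK KI cW1 (fun x h => WD _ (W1W _ h)) (ex_intro _ _ W1p).
have [g'i [Kg'i [e'1 e'2]]] := grp_inv hK Kg'.
pose c := g' \o gi \o g'i \o g.
have Kc : K c.
  apply: (grp_comp hK Kg); apply: (grp_comp hK Kg'i); exact: (grp_comp hK Kgi Kg').
have sg'i : supp g'i `<=` W1 := supp_inv e'1 sg'.
have W1q1 : W1 q1 by apply: sg'.
have cq1 : c q1 <> q1.
  have nW : ~ W1 (g q1) by move=> /W1n; rewrite eg1.
  by rewrite /c /= (fixP sg'i nW) eg1.
have [ni [Nni [en1 en2]]] := grp_inv hN Nn.
pose x := n \o g \o ni.
have sx : forall y, x y <> y -> ~ W y.
  move=> y xy; have gy : g (ni y) <> ni y by move=> e; apply: xy; rewrite /x /= e en2.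
  by rewrite -(en2 y); apply: Wn; apply: sg.
pose xi := n \o gi \o ni.
have ex1 : forall y, xi (x y) = y by move=> y; rewrite /x /xi /= en1 eg1 en2.
have cx : forall f fi, (forall y, fi (f y) = y) -> supp f `<=` W -> forall y, x (f y) = f (x y).
  move=> f fi ef sf y; apply: (comm_disj ex1 ef) => z /sx nWz fz; apply: nWz; exact: sf.
have sgi : supp gi `<=` W := supp_inv eg1 sg.
have sg'W : supp g' `<=` W by move=> z /sg' /W1W.
have sg'iW : supp g'i `<=` W by move=> z /sg'i /W1W.
pose m := x \o gi.
have fun1 : forall (f f' : fn), (forall y, f' (f y) = y) -> f' \o f = id.
  by move=> f f' e; apply/funext => y; exact: e.
have Nm : N m.
  have N1 : N (g \o ni \o gi) := nN g gi ni (KM _ Kg) (fun1 _ _ eg1) (fun1 _ _ eg2) Nni.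
  exact: (grp_comp hN N1 Nn).
pose m' := g' \o m \o g'i.
have Nm' : N m' := nN g' g'i m (KM _ Kg') (fun1 _ _ e'1) (fun1 _ _ e'2) Nm.
have [mi [Nmi [em1 em2]]] := grp_inv hN Nm.
have key : forall z, m' z = c (m z).
  move=> z; rewrite /m' /c /m /=.
  by rewrite -(cx g gi eg1 sg) eg2 -(cx g'i g' e'2 sg'iW) -(cx gi g eg2 sgi).
have ec : m' \o mi = c by apply/funext => y /=; rewrite key em2.
have NKc : (N `&` K) c by split=> //; rewrite -ec; exact: grp_comp hN Nmi Nm'.
have [e|e] := sK _ (normal_inter hK hNs KM).
  by exfalso; move: NKc; rewrite e /= => ec'; apply: cq1; rewrite ec'.
move=> f Kf; have : (N `&` K) f by rewrite e.
by case.
Qed.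
Lemma supp_grp (D : set C) : is_homeo_group [set f | homeo f /\ supp f `<=` D].
Proof.
have hh := homeo_grp.
split; first by move=> f [].
split; first by split; [exact: grp_id | exact: supp_id].
split; first by move=> f g [hf sf] [hg sg]; split; [exact: grp_comp | exact: supp_comp].
move=> f [hf sf]; have [g [hg [e1 e2]]] := grp_inv hh hf.
exists g; split; first by split=> //; exact: supp_inv e1 sf.
by split; apply/funext => x /=; [exact: e1 | exact: e2].
Qed.

Lemma stage2 (Gm N K1 K2 : set fn) (D1 D2 : set C) : is_homeo_group Gm -> normal_sub N Gm ->
  K1 `<=` Gm -> K2 `<=` Gm -> simple_group K1 -> simple_group K2 -> vigorous K1 D1 -> vigorous K2 D2 ->
  clopen D1 -> clopen D2 -> (exists x, D1 x /\ D2 x) -> K1 `<=` N -> K2 `<=` N.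
Proof.
move=> hM hNs K1M K2M s1 s2 v1 v2 c1 c2 [x0 [D1x D2x]] K1N.
have [k [q [Kk [sk kq]]]] := nontriv v1 (grp_id (proj1 s1)) (clopenI c1 c2)
    (fun x h => proj1 h) (ex_intro _ x0 (conj D1x D2x)).
have D2q : D2 q by case: (sk q kq).
exact: (normal_fix hM hNs K2M s2 v2 c2.1 (K1N _ Kk) D2q kq).
Qed.

Lemma simple_union (U V : set C) (G H : set fn) :
  KC U -> KC V -> U `&` V !=set0 -> scrK U G -> scrK V H ->
  scrK (U `|` V) (gen (G `|` H)).
Proof.
move=> [cU _] [cV _] UV [[hG [ntG sG]] [suG vG]] [[hH [ntH sH]] [suH vH]].
pose Gm := gen (G `|` H).
have GHh : G `|` H `<=` homeo by move=> f [/(proj1 hG)|/(proj1 hH)].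
have hM : is_homeo_group Gm := gen_group GHh.
have GM : G `<=` Gm by move=> f Gf; apply: gen_sub; left.
have HM : H `<=` Gm by move=> f Hf; apply: gen_sub; right.
have suM : forall g, Gm g -> supp g `<=` U `|` V.
  move=> g Mg; have := gen_min (supp_grp (U `|` V)) _ Mg.
  case; last by [].
  move=> f [Gf|Hf]; split.
  - exact: (proj1 hG).
  - by move=> x /(suG _ Gf); left.
  - exact: (proj1 hH).
  - by move=> x /(suH _ Hf); right.
have UV' : exists x, U x /\ V x by [].
split; last first.
  split=> //; exact: (vig_union cU cV UV' hG hH hM GM HM vG vH).
split=> //; split.
  by case: ntG => g [Gg gid]; exists g; split=> //; exact: GM.
move=> N hNs.
have [[n [Nn nid]]|nn] := pselect (exists n, N n /\ n <> id); last first.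
  left; apply/seteqP; split=> f.
    by move=> Nf; apply: contrapT => fid; apply: nn; exists f.
  by move=> /= ->; exact: grp_id (proj1 hNs).
right.
have [p np] : exists p, n p <> p.
  apply: contrapT => h; apply: nid; apply/funext => x; apply: contrapT => nx.
  by apply: h; exists x.
have [hN [NM nN]] := hNs.
have [Un|Vn] := suM n (NM _ Nn) p np.
  have GN := normal_fix hM hNs GM (conj hG (conj ntG sG)) vG cU.1 Nn Un np.
  have HN := stage2 hM hNs GM HM (conj hG (conj ntG sG)) (conj hH (conj ntH sH)) vG vH cU cV UV' GN.
  apply/seteqP; split=> //; apply: gen_min => // f [/GN|/HN] //.
have HN := normal_fix hM hNs HM (conj hH (conj ntH sH)) vH cV.1 Nn Vn np.
have VU : exists x, V x /\ U x by case: UV' => x [] ? ?; exists x.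
have GN := stage2 hM hNs HM GM (conj hH (conj ntH sH)) (conj hG (conj ntG sG)) vH vG cV cU VU HN.
apply/seteqP; split=> //; apply: gen_min => // f [/GN|/HN] //.
Qed.
Lemma fg_union (G H : set fn) : is_homeo_group G -> is_homeo_group H ->
  fin_gen G -> fin_gen H -> fin_gen (gen (G `|` H)).
Proof.
move=> hG hH [SG [fSG eG]] [SH [fSH eH]].
exists (SG `|` SH); split; first by rewrite finite_setU.
have SGG : SG `<=` G by rewrite -eG; exact: gen_sub.
have SHH : SH `<=` H by rewrite -eH; exact: gen_sub.
have GHh : G `|` H `<=` homeo by move=> f [/(proj1 hG)|/(proj1 hH)].
have Sh : SG `|` SH `<=` homeo by move=> f [/SGG|/SHH] => ?; apply: GHh; [left|right].
apply/seteqP; split.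
  apply: gen_min; first exact: gen_group.
  by move=> f [/SGG|/SHH] => ?; apply: gen_sub; [left|right].
apply: gen_min; first exact: gen_group.
move=> f [Gf|Hf].
  rewrite -eG in Gf; apply: (gen_min (gen_group Sh) _ Gf).
  by move=> g Sg; apply: gen_sub; left.
rewrite -eH in Hf; apply: (gen_min (gen_group Sh) _ Hf).
by move=> g Sg; apply: gen_sub; right.
Qed.

Unset Implicit Arguments. Set Strict Implicit.

Theorem proposition2p16 (U V : set cantor_space) (G H : set (cantor_space -> cantor_space)) :
  KC U -> KC V -> U `&` V !=set0 -> scrK U G -> scrK V H ->
  scrK (U `|` V) (gen (G `|` H)) /\
  (fin_gen G -> fin_gen H -> scrK_fg (U `|` V) (gen (G `|` H))).
Proof.
move=> hU hV UV sG sH.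
have S := simple_union hU hV UV sG sH.
split=> // fG fH; split=> //.
exact: fg_union (proj1 (proj1 sG)) (proj1 (proj1 sH)) fG fH.
Qed.
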